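(* Under the standing setup and assumptions (A1)–(A3) described in the context, let $\delta>0$ be as in (A3). Let $(p^b_i)_{i\in I}$ and $(p^t_j)_{j\in J}$ be probability vectors with $p^b_i=0$ for $i\notin I_\delta$ and $p^t_j=0$ for $j\notin J_\delta$; let $\rho^b=\mathrm{diag}(p^b_i)$, $\rho^t=\mathrm{diag}(p^t_j)$, and $$\rho_0=\sum_{i,i'\in I}\sum_{j,j'\in J}\rho^b_{ii'}\rho^t_{jj'}\,|i,j\rangle\langle i',j'|.$$ Then $U\rho_0U^\dagger$ is supported in $V$, and there exist Hermitian matrices $\sigma^b$ (indexed by $I\times I$) and $\sigma^t$ (indexed by $J\times J$) such that $$U\rho_0U^\dagger=\sum_{i,i'\in I}\sum_{j,j'\in J}\sigma^b_{ii'}\sigma^t_{jj'}\,|i,j\rangle\langle i',j'|,$$ and $\mathrm{Spec}(\sigma^b)=\mathrm{Spec}(\rho^b)$, $\mathrm{Spec}(\sigma^t)=\mathrm{Spec}(\rho^t)$ (equality of eigenvalues counted with multiplicity).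
   Context: Standing setup. $\mathcal H$ is a finite-dimensional complex Hilbert space; $I$ and $J$ are finite index sets and $\{|i,j\rangle: i\in I,j\in J\}$ is an orthonormal family in $\mathcal H$ (physically: low-energy edge states of a gapped 2D system on a cylinder, $i$ labelling the bottom edge and $j$ the top edge, in a fixed topological sector). $V$ denotes their span. Real numbers $\varepsilon^b_i$ ($i\in I$) and $\varepsilon^t_j$ ($j\in J$) are given (physically $\varepsilon^b_i=E^b_i-\mu_bN^b_i$, $\varepsilon^t_j=E^t_j-\mu_tN^t_j$). There is a distinguished index, denoted $\Omega$, in $I$ and in $J$ with $\varepsilon^b_\Omega=\varepsilon^t_\Omega=0\le \varepsilon^b_i,\varepsilon^t_j$ for all $i,j$. For $\delta>0$ put $I_\delta=\{i\in I:\varepsilon^b_i\le\delta\}$, $J_\delta=\{j\in J:\varepsilon^t_j\le\delta\}$, $V_\delta=\mathrm{span}\{|i,j\rangle:i\in I_\delta,j\in J_\delta\}$. $\mathcal A_b$ and $\mathcal A_t$ are sets of linear operators on $\mathcal H$ (''operators supported near the bottom edge / top edge''), each closed under sums, scalar multiples, products and adjoints and containing the identity, such that every element of $\mathcal A_b$ commutes with every element of $\mathcal A_t$. $U$ is a unitary on $\mathcal H$ (the flux-insertion evolution, a finite-time evolution by a local Hamiltonian) such that $U^\dagger\mathcal A_bU\subseteq\mathcal A_b$, $U\mathcal A_bU^\dagger\subseteq\mathcal A_b$, $U^\dagger\mathcal A_tU\subseteq\mathcal A_t$, $U\mathcal A_tU^\dagger\subseteq\mathcal A_t$ (idealized Lieb–Robinson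 locality). Assumptions. (A1) For all $i,i'\in I$ there is $O^b_{i'i}\in\mathcal A_b$ with $O^b_{i'i}|k,j\rangle=\delta_{ki}|i',j\rangle$ for all $k\in I,j\in J$; for all $j,j'\in J$ there is $O^t_{j'j}\in\mathcal A_t$ with $O^t_{j'j}|i,l\rangle=\delta_{lj}|i,j'\rangle$ for all $i\in I,l\in J$. (A2) For all $i\in I$, $j\in J$, $O^b\in\mathcal A_b$, $O^t\in\mathcal A_t$: $\langle i,j|O^bO^t|i,j\rangle=\langle i,j|O^b|i,j\rangle\langle i,j|O^t|i,j\rangle$. (A3) There is $\delta>0$ with $U V_\delta\subseteq V$. (The diagonal $\rho^b,\rho^t$ model the edge Gibbs states at temperatures well below $\delta$.) *)

(* Defs.v *)
(* Complex numbers: algC. Hilbert space H = 'cV[algC]_n with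
   the standard inner product; index sets I = 'I_m, J = 'I_k. *)
From mathcomp Require Import all_boot all_order all_algebra algC.
Set Implicit Arguments. Unset Strict Implicit. Unset Printing Implicit Defensive.
Import Order.TTheory GRing.Theory Num.Theory.
Local Open Scope ring_scope.

Definition adjmx (p q : nat) (A : 'M[algC]_(p, q)) : 'M[algC]_(q, p) :=
  (map_mx Num.conj A)^T.

Definition braket (n : nat) (v : 'cV[algC]_n) (A : 'M[algC]_n) (w : 'cV[algC]_n)
  : algC := (adjmx v *m A *m w) 0 0.

Definition ketbra (n : nat) (v w : 'cV[algC]_n) : 'M[algC]_n := v *m adjmx w.

Definition in_span (n m k : nat) (ket : 'I_m -> 'I_k -> 'cV[algC]_n)
  (P : 'I_m -> bool) (Q : 'I_k -> bool) (v : 'cV[algC]_n) : Prop :=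
  exists c : 'I_m -> 'I_k -> algC,
    v = \sum_(i < m | P i) \sum_(j < k | Q j) c i j *: ket i j.

Definition inV n m k (ket : 'I_m -> 'I_k -> 'cV[algC]_n) :=
  in_span ket predT predT.

Definition inVdelta n m k (ket : 'I_m -> 'I_k -> 'cV[algC]_n)
  (eb : 'I_m -> algC) (et : 'I_k -> algC) (delta : algC) :=
  in_span ket (fun i => eb i <= delta) (fun j => et j <= delta).

Definition prod_op n m k (ket : 'I_m -> 'I_k -> 'cV[algC]_n)
  (Mb : 'M[algC]_m) (Mt : 'M[algC]_k) : 'M[algC]_n :=
  \sum_(i < m) \sum_(i' < m) \sum_(j < k) \sum_(j' < k)
     (Mb i i' * Mt j j') *: ketbra (ket i j) (ket i' j').

Definition star_algebra n (A : 'M[algC]_n -> Prop) : Prop :=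
  [/\ A 1%:M,
      (forall X Y, A X -> A Y -> A (X + Y)),
      (forall (c : algC) X, A X -> A (c *: X)),
      (forall X Y, A X -> A Y -> A (X *m Y)) &
      (forall X, A X -> A (adjmx X))].

(* Main.v *)
Require Import Defs.
From mathcomp Require Import all_boot all_order all_algebra algC ring.
Import Order.TTheory GRing.Theory Num.Theory.
Local Open Scope ring_scope.
Set Implicit Arguments. Unset Strict Implicit. Unset Printing Implicit Defensive.
Local Open Scope ring_scope.

Lemma adjmxM p q r (A : 'M[algC]_(p,q)) (B : 'M[algC]_(q,r)) : adjmx (A *m B) = adjmx B *m adjmx A.
Proof. by rewrite /adjmx map_mxM trmx_mul. Qed.
Lemma adjmxK p q (A : 'M[algC]_(p,q)) : adjmx (adjmx A) = A.
Proof. by apply/matrixP=> i j; rewrite /adjmx !mxE conjCK. Qed.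
Lemma adjmxD p q (A B : 'M[algC]_(p,q)) : adjmx (A + B) = adjmx A + adjmx B.
Proof. by rewrite /adjmx map_mxD linearD. Qed.
Lemma adjmxZ p q c (A : 'M[algC]_(p,q)) : adjmx (c *: A) = c^* *: adjmx A.
Proof. by apply/matrixP=> i j; rewrite /adjmx !mxE rmorphM. Qed.
Lemma adjmx1 p : adjmx (1%:M : 'M[algC]_p) = 1%:M.
Proof. by rewrite /adjmx map_mx1 trmx1. Qed.
Lemma adjmxE p q (A : 'M[algC]_(p,q)) i j : adjmx A i j = (A j i)^*.
Proof. by rewrite /adjmx !mxE. Qed.

Definition ip n (v w : 'cV[algC]_n) : algC := (adjmx v *m w) 0 0.

Lemma ipDr n (v w1 w2 : 'cV[algC]_n) : ip v (w1 + w2) = ip v w1 + ip v w2.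
Proof. by rewrite /ip mulmxDr mxE. Qed.
Lemma ipZr n (v w : 'cV[algC]_n) c : ip v (c *: w) = c * ip v w.
Proof. by rewrite /ip -scalemxAr mxE. Qed.
Lemma ip_sumr n I (r : seq I) (P : pred I) (v : 'cV[algC]_n) (F : I -> 'cV_n) :
  ip v (\sum_(i <- r | P i) F i) = \sum_(i <- r | P i) ip v (F i).
Proof. by rewrite /ip mulmx_sumr summxE. Qed.
Lemma ip_conj n (v w : 'cV[algC]_n) : ip w v = (ip v w)^*.
Proof.
rewrite /ip !mxE rmorph_sum; apply: eq_bigr => i _.
by rewrite !adjmxE rmorphM /= conjCK mulrC.
Qed.
Lemma ipZl n (v w : 'cV[algC]_n) c : ip (c *: v) w = c^* * ip v w.
Proof. by rewrite ip_conj ipZr rmorphM /= -ip_conj. Qed.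
Lemma ip_suml n I (r : seq I) (P : pred I) (w : 'cV[algC]_n) (F : I -> 'cV_n) :
  ip (\sum_(i <- r | P i) F i) w = \sum_(i <- r | P i) ip (F i) w.
Proof. rewrite ip_conj ip_sumr rmorph_sum; apply: eq_bigr => i _ /=; by rewrite -ip_conj. Qed.
Lemma ip_adj n (v w : 'cV[algC]_n) A : ip v (A *m w) = ip (adjmx A *m v) w.
Proof. by rewrite /ip adjmxM adjmxK mulmxA. Qed.
Lemma braketE n (v w : 'cV[algC]_n) A : braket v A w = ip v (A *m w).
Proof. by rewrite /braket /ip mulmxA. Qed.

Lemma sum_delta2 m k (c : 'I_m -> 'I_k -> algC) a b :
  \sum_(a' < m) \sum_(b' < k) c a' b' * ((a == a') && (b == b'))%:R = c a b.
Proof.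
have h1 : forall a', a' != a -> \sum_(b' < k) c a' b' * ((a == a') && (b == b'))%:R = 0.
  by move=> a' ne; apply: big1 => b' _; rewrite eq_sym (negbTE ne) mulr0.
have h2 : forall b', b' != b -> c a b' * ((a == a) && (b == b'))%:R = 0.
  by move=> b' ne; rewrite (eq_sym b) (negbTE ne) andbF mulr0.
rewrite (bigD1 a) //= [X in _ + X = _](eq_bigr (fun _ => 0)); last by move=> i ne; apply: h1.
rewrite big1_eq addr0.
rewrite (bigD1 b) //= [X in _ + X = _](eq_bigr (fun _ => 0)); last by move=> i ne; apply: h2.
by rewrite big1_eq addr0 !eqxx mulr1.
Qed.

Lemma ip0r n (v : 'cV[algC]_n) : ip v 0 = 0.
Proof. by rewrite /ip mulmx0 mxE. Qed.

Lemma ip_adjl n (v w : 'cV[algC]_n) A : ip (A *m v) w = ip v (adjmx A *m w).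
Proof. by rewrite ip_adj adjmxK. Qed.

Section Ortho.
Lemma ortho_ip n m k (ket : 'I_m -> 'I_k -> 'cV[algC]_n)
  (Horth : forall i j i' j',
      adjmx (ket i j) *m ket i' j' = ((i == i') && (j == j'))%:R%:M) i j i' j' :
  ip (ket i j) (ket i' j') = ((i == i') && (j == j'))%:R.
Proof. by rewrite /ip Horth mxE eqxx mulr1n. Qed.

Lemma ip_expand n m k (ket : 'I_m -> 'I_k -> 'cV[algC]_n)
  (Horth : forall i j i' j',
      adjmx (ket i j) *m ket i' j' = ((i == i') && (j == j'))%:R%:M) c a b :
  ip (ket a b) (\sum_(a' < m) \sum_(b' < k) c a' b' *: ket a' b') = c a b.
Proof.
rewrite ip_sumr -[RHS](sum_delta2 c a b); apply: eq_bigr => a' _.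
rewrite ip_sumr; apply: eq_bigr => b' _.
by rewrite ipZr (ortho_ip Horth).
Qed.

Lemma inV_expand n m k (ket : 'I_m -> 'I_k -> 'cV[algC]_n)
  (Horth : forall i j i' j',
      adjmx (ket i j) *m ket i' j' = ((i == i') && (j == j'))%:R%:M) v :
  inV ket v -> v = \sum_(a < m) \sum_(b < k) ip (ket a b) v *: ket a b.
Proof.
case=> c ->.
apply: eq_bigr => a _; apply: eq_bigr => b _.
by rewrite (ip_expand Horth).
Qed.
End Ortho.

Section Loc.
Lemma L1b n m k (ket : 'I_m -> 'I_k -> 'cV[algC]_n) (Ab At : 'M[algC]_n -> Prop) (Omt : 'I_k)
  (Horth : forall i j i' j',
      adjmx (ket i j) *m ket i' j' = ((i == i') && (j == j'))%:R%:M)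
  (HAt : star_algebra At)
  (Hcomm : forall X Y, Ab X -> At Y -> X *m Y = Y *m X)
  (HA1t : forall j j' : 'I_k, exists O, At O /\
      forall (i : 'I_m) (l : 'I_k), O *m ket i l = (if l == j then ket i j' else 0))
  (HA2 : forall i j Ob Ot, Ab Ob -> At Ot ->
      braket (ket i j) (Ob *m Ot) (ket i j)
      = braket (ket i j) Ob (ket i j) * braket (ket i j) Ot (ket i j))
  Z a b : Ab Z ->
  ip (ket a b) (Z *m ket a b) = ip (ket a Omt) (Z *m ket a Omt).
Proof.
case: HAt => _ _ _ AtM AtA => HZ.
have [O [HO HOk]] := HA1t Omt b.
have eK : ket a b = O *m ket a Omt by rewrite HOk eqxx.
rewrite eK ip_adjl !mulmxA -(Hcomm _ _ HZ (AtA _ HO)) -(mulmxA Z).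
rewrite -braketE HA2 //; last exact: AtM (AtA _ HO) HO.
by rewrite [X in _ * X]braketE -mulmxA -ip_adjl -eK (ortho_ip Horth) !eqxx mulr1 braketE.
Qed.

Lemma Gb n m k (ket : 'I_m -> 'I_k -> 'cV[algC]_n) (Ab At : 'M[algC]_n -> Prop) (Omt : 'I_k)
  (Horth : forall i j i' j',
      adjmx (ket i j) *m ket i' j' = ((i == i') && (j == j'))%:R%:M)
  (HAb : star_algebra Ab) (HAt : star_algebra At)
  (Hcomm : forall X Y, Ab X -> At Y -> X *m Y = Y *m X)
  (HA1b : forall i i' : 'I_m, exists O, Ab O /\
      forall (l : 'I_m) (j : 'I_k), O *m ket l j = (if l == i then ket i' j else 0))
  (HA1t : forall j j' : 'I_k, exists O, At O /\
      forall (i : 'I_m) (l : 'I_k), O *m ket i l = (if l == j then ket i j' else 0))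
  (HA2 : forall i j Ob Ot, Ab Ob -> At Ot ->
      braket (ket i j) (Ob *m Ot) (ket i j)
      = braket (ket i j) Ob (ket i j) * braket (ket i j) Ot (ket i j))
  X a b a' b' : Ab X ->
  ip (ket a' b') (X *m ket a b) = (b' == b)%:R * ip (ket a' Omt) (X *m ket a Omt).
Proof.
move=> HX.
have HAt' := HAt; case: HAt' => _ _ _ AtM AtA.
case: HAb => _ _ _ AbM AbA.
have [Ob [HOb HObk]] := HA1b a a'.
have key : forall b1 b2, ip (ket a' b2) (X *m ket a b1) =
    (b2 == b1)%:R * ip (ket a Omt) ((adjmx Ob *m X) *m ket a Omt).
  move=> b1 b2.
  have [Ot [HOt HOtk]] := HA1t b1 b2.
  have eK : ket a' b2 = Ob *m (Ot *m ket a b1) by rewrite HOtk eqxx HObk eqxx.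
  rewrite eK ip_adjl ip_adjl !mulmxA -(mulmxA (adjmx Ot)).
  rewrite -(Hcomm _ _ (AbM _ _ (AbA _ HOb) HX) (AtA _ HOt)).
  have HZ : Ab (adjmx Ob *m X) by exact: AbM (AbA _ HOb) HX.
  rewrite -braketE HA2 //; last exact: AtA.
  rewrite mulrC [X in X * _]braketE -ip_adjl HOtk eqxx (ortho_ip Horth) eqxx /=.
  by rewrite braketE (L1b Omt Horth HAt Hcomm HA1t HA2 a b1 HZ) -mulmxA.
by rewrite key (key Omt Omt) eqxx mul1r.
Qed.
End Loc.

Lemma Gt n m k (ket : 'I_m -> 'I_k -> 'cV[algC]_n) (Ab At : 'M[algC]_n -> Prop) (Omb : 'I_m)
  (Horth : forall i j i' j',
      adjmx (ket i j) *m ket i' j' = ((i == i') && (j == j'))%:R%:M)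
  (HAb : star_algebra Ab) (HAt : star_algebra At)
  (Hcomm : forall X Y, Ab X -> At Y -> X *m Y = Y *m X)
  (HA1b : forall i i' : 'I_m, exists O, Ab O /\
      forall (l : 'I_m) (j : 'I_k), O *m ket l j = (if l == i then ket i' j else 0))
  (HA1t : forall j j' : 'I_k, exists O, At O /\
      forall (i : 'I_m) (l : 'I_k), O *m ket i l = (if l == j then ket i j' else 0))
  (HA2 : forall i j Ob Ot, Ab Ob -> At Ot ->
      braket (ket i j) (Ob *m Ot) (ket i j)
      = braket (ket i j) Ob (ket i j) * braket (ket i j) Ot (ket i j))
  Y a b a' b' : At Y ->
  ip (ket a' b') (Y *m ket a b) = (a' == a)%:R * ip (ket Omb b') (Y *m ket Omb b).
Proof.
move=> HY.
pose ket' := fun (j : 'I_k) (i : 'I_m) => ket i j.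
have Horth' : forall j i j' i', adjmx (ket' j i) *m ket' j' i' = ((j == j') && (i == i'))%:R%:M.
  by move=> j i j' i'; rewrite /ket' Horth andbC.
have Hcomm' : forall X Y, At X -> Ab Y -> X *m Y = Y *m X.
  by move=> X Y' hX hY; rewrite (Hcomm _ _ hY hX).
have HA1t' : forall j j' : 'I_k, exists O, At O /\
      forall (l : 'I_k) (i : 'I_m), O *m ket' l i = (if l == j then ket' j' i else 0).
  by move=> j j'; have [O [HO HOk]] := HA1t j j'; exists O; split => // l i; rewrite /ket' HOk.
have HA1b' : forall i i' : 'I_m, exists O, Ab O /\
      forall (j : 'I_k) (l : 'I_m), O *m ket' j l = (if l == i then ket' j i' else 0).
  by move=> i i'; have [O [HO HOk]] := HA1b i i'; exists O; split => // j l; rewrite /ket' HOk.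
have HA2' : forall j i Ot Ob, At Ot -> Ab Ob ->
      braket (ket' j i) (Ot *m Ob) (ket' j i)
      = braket (ket' j i) Ot (ket' j i) * braket (ket' j i) Ob (ket' j i).
  by move=> j i Ot Ob hOt hOb; rewrite /ket' -(Hcomm _ _ hOb hOt) HA2 // mulrC.
exact: (Gb Omb Horth' HAt HAb Hcomm' HA1t' HA1b' HA2' b a b' a' HY).
Qed.

Lemma prod_state n m k (ket : 'I_m -> 'I_k -> 'cV[algC]_n) (Ab At : 'M[algC]_n -> Prop)
  (Horth : forall i j i' j',
      adjmx (ket i j) *m ket i' j' = ((i == i') && (j == j'))%:R%:M)
  (HA1b : forall i i' : 'I_m, exists O, Ab O /\
      forall (l : 'I_m) (j : 'I_k), O *m ket l j = (if l == i then ket i' j else 0))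
  (HA1t : forall j j' : 'I_k, exists O, At O /\
      forall (i : 'I_m) (l : 'I_k), O *m ket i l = (if l == j then ket i j' else 0))
  (psi : 'cV[algC]_n) (HV : inV ket psi) (H1 : ip psi psi = 1)
  (HF : forall X Y, Ab X -> At Y ->
     ip psi (X *m (Y *m psi)) = ip psi (X *m psi) * ip psi (Y *m psi)) :
  exists (al : 'I_m -> algC) (ga : 'I_k -> algC),
    forall a b, ip (ket a b) psi = al a * ga b.
Proof.
set c := fun a b => ip (ket a b) psi.
have Hpsi := inV_expand Horth HV.
have XY : forall a a' b b' X Y,
    (forall (l : 'I_m) (j : 'I_k), X *m ket l j = (if l == a then ket a' j else 0)) ->
    (forall (i : 'I_m) (l : 'I_k), Y *m ket i l = (if l == b then ket i b' else 0)) ->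
    ip psi (X *m (Y *m psi)) = c a b * (c a' b')^*.
  move=> a a' b b' X Y HX HY.
  rewrite {2}Hpsi -(sum_delta2 (fun l r => c l r * (c a' b')^*) a b).
  rewrite !mulmx_sumr ip_sumr; apply: eq_bigr => l _.
  rewrite !mulmx_sumr ip_sumr; apply: eq_bigr => r _.
  rewrite -!scalemxAr ipZr HY; case: (eqVneq r b) => [->|ne].
    rewrite HX; case: (eqVneq l a) => [->|ne2].
      by rewrite mulr1 [ip psi _]ip_conj.
    by rewrite /= ip0r !mulr0.
  by rewrite mulmx0 ip0r andbF !mulr0.
have [a0 [b0 nz]] : exists a0 b0, c a0 b0 != 0.
  case: (pickP (fun ab : 'I_m * 'I_k => c ab.1 ab.2 != 0)) => [[a0 b0] /= h|h].
    by exists a0, b0.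
  have p0 : psi = 0.
    rewrite Hpsi; apply: big1 => a _; apply: big1 => b _.
    by have := h (a, b); rewrite /= /c => /negbFE/eqP ->; rewrite scale0r.
  by move: H1; rewrite {2}p0 ip0r => /eqP; rewrite eq_sym oner_eq0.
have E : forall a a' b b', exists M N, c a b * (c a' b')^* = M * N.
  move=> a a' b b'.
  have [X [HX HXk]] := HA1b a a'; have [Y [HY HYk]] := HA1t b b'.
  by exists (ip psi (X *m psi)), (ip psi (Y *m psi)); rewrite -HF // (XY _ _ _ _ _ _ HXk HYk).
have key : forall a b, c a b * c a0 b0 = c a b0 * c a0 b.
  move=> a b.
  have [X1 [HX1 HX1k]] := HA1b a a0; have [X0 [HX0 HX0k]] := HA1b a0 a0.
  have [Y1 [HY1 HY1k]] := HA1t b b0; have [Y0 [HY0 HY0k]] := HA1t b0 b0.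
  have E1 := XY _ _ _ _ _ _ HX1k HY1k; rewrite HF // in E1.
  have E2 := XY _ _ _ _ _ _ HX1k HY0k; rewrite HF // in E2.
  have E3 := XY _ _ _ _ _ _ HX0k HY1k; rewrite HF // in E3.
  have E4 := XY _ _ _ _ _ _ HX0k HY0k; rewrite HF // in E4.
  have nzc : (c a0 b0)^* * (c a0 b0)^* != 0 by rewrite mulf_neq0 // conjC_eq0.
  apply: (mulIf nzc).
  have -> : c a b * c a0 b0 * ((c a0 b0)^* * (c a0 b0)^*) =
     (c a b * (c a0 b0)^*) * (c a0 b0 * (c a0 b0)^*) by ring.
  have -> : c a b0 * c a0 b * ((c a0 b0)^* * (c a0 b0)^*) =
     (c a b0 * (c a0 b0)^*) * (c a0 b * (c a0 b0)^*) by ring.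
  rewrite -E1 -E2 -E3 -E4; ring.
exists (fun a => c a b0 / c a0 b0), (fun b => c a0 b) => a b.
rewrite -[ip _ _]/(c a b).
by rewrite mulrAC -key mulfK.
Qed.

Lemma adjmx0 p q : adjmx (0 : 'M[algC]_(p,q)) = 0.
Proof. by apply/matrixP=> i j; rewrite adjmxE !mxE rmorph0. Qed.

Lemma adjmx_sum p q I (r : seq I) (P : pred I) (F : I -> 'M[algC]_(p,q)) :
  adjmx (\sum_(i <- r | P i) F i) = \sum_(i <- r | P i) adjmx (F i).
Proof.
elim/big_rec2: _ => [|i A1 A2 _ <-]; first exact: adjmx0.
by rewrite adjmxD.
Qed.

Lemma sum_only (V : zmodType) p (F : 'I_p -> V) i :
  (forall x, x != i -> F x = 0) -> \sum_x F x = F i.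
Proof. by move=> h; rewrite (bigD1 i) //= big1 ?addr0 // => x /h. Qed.

Section ProdOp.
Variables (n m k : nat) (ket : 'I_m -> 'I_k -> 'cV[algC]_n).

Lemma prod_op_scale (A A' : 'M[algC]_m) (B B' : 'M[algC]_k) c :
  (forall a a' b b', A a a' * B b b' = c * (A' a a' * B' b b')) ->
  prod_op ket A B = c *: prod_op ket A' B'.
Proof.
move=> h; rewrite /prod_op scaler_sumr; apply: eq_bigr => a _.
rewrite scaler_sumr; apply: eq_bigr => a' _.
rewrite scaler_sumr; apply: eq_bigr => b _.
rewrite scaler_sumr; apply: eq_bigr => b' _.
by rewrite scalerA h.
Qed.

Lemma prod_opDl (A1 A2 : 'M[algC]_m) (B : 'M[algC]_k) :
  prod_op ket (A1 + A2) B = prod_op ket A1 B + prod_op ket A2 B.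
Proof.
rewrite /prod_op -big_split; apply: eq_bigr => a _.
rewrite -big_split; apply: eq_bigr => a' _.
rewrite -big_split; apply: eq_bigr => b _.
rewrite -big_split; apply: eq_bigr => b' _.
by rewrite mxE mulrDl scalerDl.
Qed.

Lemma prod_opDr (A : 'M[algC]_m) (B1 B2 : 'M[algC]_k) :
  prod_op ket A (B1 + B2) = prod_op ket A B1 + prod_op ket A B2.
Proof.
rewrite /prod_op -big_split; apply: eq_bigr => a _.
rewrite -big_split; apply: eq_bigr => a' _.
rewrite -big_split; apply: eq_bigr => b _.
rewrite -big_split; apply: eq_bigr => b' _.
by rewrite mxE mulrDr scalerDl.
Qed.

Lemma prod_op0l (B : 'M[algC]_k) : prod_op ket 0 B = 0.
Proof.
rewrite /prod_op big1 // => a _; rewrite big1 // => a' _; rewrite big1 // => b _.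
by rewrite big1 // => b' _; rewrite mxE mul0r scale0r.
Qed.

Lemma prod_op0r (A : 'M[algC]_m) : prod_op ket A 0 = 0.
Proof.
rewrite /prod_op big1 // => a _; rewrite big1 // => a' _; rewrite big1 // => b _.
by rewrite big1 // => b' _; rewrite mxE mulr0 scale0r.
Qed.

Lemma prod_op_suml I (r : seq I) (P : pred I) (F : I -> 'M[algC]_m) B :
  prod_op ket (\sum_(i <- r | P i) F i) B = \sum_(i <- r | P i) prod_op ket (F i) B.
Proof.
elim/big_rec2: _ => [|i A1 A2 _ <-]; first exact: prod_op0l.
by rewrite prod_opDl.
Qed.

Lemma prod_op_sumr I (r : seq I) (P : pred I) A (F : I -> 'M[algC]_k) :
  prod_op ket A (\sum_(i <- r | P i) F i) = \sum_(i <- r | P i) prod_op ket A (F i).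
Proof.
elim/big_rec2: _ => [|i A1 A2 _ <-]; first exact: prod_op0r.
by rewrite prod_opDr.
Qed.

Definition outer p (u : 'I_p -> algC) : 'M[algC]_p := \matrix_(a, a') (u a * (u a')^*).

Lemma phi_outer (u : 'I_m -> algC) (v : 'I_k -> algC) :
  let phi := \sum_(a < m) \sum_(b < k) (u a * v b) *: ket a b in
  phi *m adjmx phi = prod_op ket (outer u) (outer v).
Proof.
move=> phi.
have E : forall a b, ((u a * v b) *: ket a b) *m adjmx phi =
   \sum_(a' < m) \sum_(b' < k) (outer u a a' * outer v b b') *: ketbra (ket a b) (ket a' b').
  move=> a b; rewrite -scalemxAl /phi adjmx_sum mulmx_sumr scaler_sumr.
  apply: eq_bigr => a' _.
  rewrite adjmx_sum mulmx_sumr scaler_sumr; apply: eq_bigr => b' _.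
  rewrite adjmxZ -scalemxAr scalerA /ketbra !mxE; congr (_ *: _).
  rewrite rmorphM /=; ring.
rewrite {1}/phi mulmx_suml /prod_op; apply: eq_bigr => a _.
by rewrite mulmx_suml (eq_bigr _ (fun b _ => E a b)) exchange_big.
Qed.
End ProdOp.
Lemma char_polyC_mul (R : idomainType) m (X Y : 'M[R]_m) :
  char_poly (X *m Y) = char_poly (Y *m X).
Proof.
rewrite /char_poly /char_poly_mx !map_mxM.
set XP := map_mx polyC X; set YP := map_mx polyC Y.
set P := block_mx ('X%:M : 'M[{poly R}]_m) XP YP 1%:M.
have h1 : \det P = \det ('X%:M - XP *m YP).
  have -> : P = block_mx 1%:M XP 0 1%:M *m block_mx ('X%:M - XP *m YP) 0 YP 1%:M.
    by rewrite mulmx_block !mul1mx !mul0mx !mulmx1 !add0r subrK.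
  by rewrite det_mulmx det_ublock det_lblock !det1 !mul1r mulr1.
have h2 : block_mx 1%:M 0 (- YP) ('X%:M) *m P = block_mx ('X%:M) XP 0 ('X%:M - YP *m XP).
  by rewrite /P mulmx_block !mul1mx !mul0mx !addr0 mulmx1 mulNmx scalar_mxC addNr addrC mulNmx.
have := congr1 determinant h2.
rewrite det_mulmx det_lblock det_ublock h1 !det1 !mul1r !det_scalar.
move/mulfI; apply; rewrite expf_neq0 // polyX_eq0.
by [].
Qed.

Lemma spec_lemma p (d : 'I_p -> algC) (P : pred 'I_p) (x : 'I_p -> 'I_p -> algC) (s : algC)
  (Hd : forall i, ~~ P i -> d i = 0)
  (Ho : forall i i', P i -> P i' -> s * (\sum_a (x i a)^* * x i' a) = (i == i')%:R) :
  char_poly (s *: \sum_i d i *: outer (x i)) = char_poly (diag_mx (\row_i d i)).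
Proof.
pose A : 'M[algC]_p := \matrix_(a, i) (if P i then x i a else 0).
have eS : \sum_i d i *: outer (x i) = A *m diag_mx (\row_i d i) *m adjmx A.
  apply/matrixP => a a'; rewrite summxE !mxE; apply: eq_bigr => i _.
  rewrite mul_mx_diag !mxE.
  case: (boolP (P i)) => hi; [by rewrite /=; ring | by rewrite Hd // !mul0r].
rewrite eS scalemxAr -mulmxA char_polyC_mul; congr char_poly.
apply/matrixP => i j; rewrite -mulmxA -scalemxAl mul_diag_mx !mxE.
case: (boolP (P i)) => hi; last by rewrite Hd // !mul0r mul0rn.
rewrite -mulr_natr; congr (_ * _).
case: (boolP (P j)) => hj.
  rewrite -(Ho i j hi hj); congr (_ * _); apply: eq_bigr => a _.
  by rewrite adjmxE !mxE hi hj.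
have nij : i != j by apply: contraNneq hj => <-.
rewrite (negbTE nij) big1 ?mulr0 // => a _.
by rewrite !mxE (negbTE hj) mulr0.
Qed.

Lemma rho0E n m k (ket : 'I_m -> 'I_k -> 'cV[algC]_n) (pb : 'I_m -> algC) (pt : 'I_k -> algC) :
  prod_op ket (diag_mx (\row_i pb i)) (diag_mx (\row_j pt j)) =
  \sum_i \sum_j (pb i * pt j) *: ketbra (ket i j) (ket i j).
Proof.
rewrite /prod_op; apply: eq_bigr => i _.
rewrite (sum_only (i:=i)) => [|i' ni]; last first.
  apply: big1 => j _; apply: big1 => j' _.
  by rewrite !mxE eq_sym (negbTE ni) mulr0n mul0r scale0r.
apply: eq_bigr => j _.
rewrite (sum_only (i:=j)) => [|j' nj]; last by rewrite !mxE eq_sym (negbTE nj) mulr0n mulr0 scale0r.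
by rewrite !mxE !eqxx !mulr1n.
Qed.

Lemma prod_op_inV n m k (ket : 'I_m -> 'I_k -> 'cV[algC]_n) A B (w : 'cV[algC]_n) :
  inV ket (prod_op ket A B *m w).
Proof.
exists (fun a b => \sum_(a' < m) \sum_(b' < k) (A a a' * B b b') * ip (ket a' b') w).
rewrite /prod_op mulmx_suml; apply: eq_bigr => a _.
have E : forall a' b b', ((A a a' * B b b') *: ketbra (ket a b) (ket a' b')) *m w =
    ((A a a' * B b b') * ip (ket a' b') w) *: ket a b.
  move=> a' b b'; rewrite -scalemxAl /ketbra -mulmxA (mx11_scalar (adjmx _ *m w)).
  by rewrite mul_mx_scalar scalerA.
rewrite mulmx_suml.
rewrite (eq_bigr (fun a' => \sum_(b < k) \sum_(b' < k)
    ((A a a' * B b b') * ip (ket a' b') w) *: ket a b)); last first.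
  move=> a' _; rewrite mulmx_suml; apply: eq_bigr => b _.
  by rewrite mulmx_suml; apply: eq_bigr => b' _; exact: E.
rewrite exchange_big /=; apply: eq_bigr => b _.
rewrite scaler_suml; apply: eq_bigr => a' _.
by rewrite scaler_suml.
Qed.

Unset Implicit Arguments.

Theorem mainTheorem4
  (n m k : nat) (ket : 'I_m -> 'I_k -> 'cV[algC]_n)
  (eb : 'I_m -> algC) (et : 'I_k -> algC) (Omb : 'I_m) (Omt : 'I_k)
  (Ab At : 'M[algC]_n -> Prop) (U : 'M[algC]_n)
  (* orthonormal family *)
  (Horth : forall i j i' j',
      adjmx (ket i j) *m ket i' j' = ((i == i') && (j == j'))%:R%:M)
  (* real energies, Omega is the minimum with value 0 *)
  (Heb_real : forall i, eb i \is Num.real)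
  (Het_real : forall j, et j \is Num.real)
  (HebO : eb Omb = 0) (HetO : et Omt = 0)
  (Heb0 : forall i, 0 <= eb i) (Het0 : forall j, 0 <= et j)
  (* local algebras *)
  (HAb : star_algebra Ab) (HAt : star_algebra At)
  (Hcomm : forall X Y, Ab X -> At Y -> X *m Y = Y *m X)
  (* U unitary and locality-preserving *)
  (HUu1 : adjmx U *m U = 1%:M) (HUu2 : U *m adjmx U = 1%:M)
  (HUb1 : forall X, Ab X -> Ab (adjmx U *m X *m U))
  (HUb2 : forall X, Ab X -> Ab (U *m X *m adjmx U))
  (HUt1 : forall X, At X -> At (adjmx U *m X *m U))
  (HUt2 : forall X, At X -> At (U *m X *m adjmx U))
  (* (A1) *)
  (HA1b : forall i i' : 'I_m, exists O, Ab O /\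
      forall (l : 'I_m) (j : 'I_k), O *m ket l j = (if l == i then ket i' j else 0))
  (HA1t : forall j j' : 'I_k, exists O, At O /\
      forall (i : 'I_m) (l : 'I_k), O *m ket i l = (if l == j then ket i j' else 0))
  (* (A2) *)
  (HA2 : forall i j Ob Ot, Ab Ob -> At Ot ->
      braket (ket i j) (Ob *m Ot) (ket i j)
      = braket (ket i j) Ob (ket i j) * braket (ket i j) Ot (ket i j))
  (* (A3) *)
  (delta : algC) (Hdelta : 0 < delta)
  (HA3 : forall v, inVdelta ket eb et delta v -> inV ket (U *m v))
  (* thermal-like probability vectors *)
  (pb : 'I_m -> algC) (pt : 'I_k -> algC)
  (Hpb0 : forall i, 0 <= pb i) (Hpb1 : \sum_(i < m) pb i = 1)
  (Hpbd : forall i, ~~ (eb i <= delta) -> pb i = 0)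
  (Hpt0 : forall j, 0 <= pt j) (Hpt1 : \sum_(j < k) pt j = 1)
  (Hptd : forall j, ~~ (et j <= delta) -> pt j = 0) :
  let rhob : 'M[algC]_m := diag_mx (\row_i pb i) in
  let rhot : 'M[algC]_k := diag_mx (\row_j pt j) in
  let rho0 := prod_op ket rhob rhot in
  (forall w, inV ket (U *m rho0 *m adjmx U *m w)) /\
  exists (sigb : 'M[algC]_m) (sigt : 'M[algC]_k),
    [/\ adjmx sigb = sigb, adjmx sigt = sigt,
        U *m rho0 *m adjmx U = prod_op ket sigb sigt,
        char_poly sigb = char_poly rhob &
        char_poly sigt = char_poly rhot].
Proof.
move=> rhob rhot rho0.
have HAb' := HAb; case: HAb' => Ab1 AbD AbZ AbM AbA.
have HAt' := HAt; case: HAt' => At1 AtD AtZ AtM AtA.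
have /fin_all_exists [Obf HObf] : forall p : 'I_m * 'I_m, exists O, Ab O /\
   forall (l : 'I_m) (j : 'I_k), O *m ket l j = (if l == p.1 then ket p.2 j else 0).
  by move=> -[i i']; exact: HA1b.
have /fin_all_exists [Otf HOtf] : forall p : 'I_k * 'I_k, exists O, At O /\
   forall (i : 'I_m) (l : 'I_k), O *m ket i l = (if l == p.1 then ket i p.2 else 0).
  by move=> -[j j']; exact: HA1t.
have Ib0 : eb Omb <= delta by rewrite HebO ltW.
have It0 : et Omt <= delta by rewrite HetO ltW.
have HV : forall i j, eb i <= delta -> et j <= delta -> inV ket (U *m ket i j).
  move=> i j hi hj; apply: HA3.
  exists (fun a b => ((a == i) && (b == j))%:R).
  rewrite (bigD1 i) //= [X in _ + X]big1 ?addr0; last first.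
    by move=> a /andP[_ /negbTE na]; apply: big1 => b _; rewrite na scale0r.
  rewrite (bigD1 j) //= [X in _ + X]big1 ?addr0 ?eqxx ?scale1r // => b /andP[_ /negbTE nb].
  by rewrite nb andbF scale0r.
have ipU : forall v w, ip (U *m v) (U *m w) = ip v w.
  by move=> v w; rewrite ip_adjl mulmxA HUu1 mul1mx.
pose B i := U *m Obf (Omb, i) *m adjmx U.
pose T j := U *m Otf (Omt, j) *m adjmx U.
have HB : forall i, Ab (B i) by move=> i; apply: HUb2; case: (HObf (Omb, i)).
have HT : forall j, At (T j) by move=> j; apply: HUt2; case: (HOtf (Omt, j)).
have hB : forall i j, U *m ket i j = B i *m (U *m ket Omb j).
  move=> i j; rewrite /B -!mulmxA (mulmxA (adjmx U)) HUu1 mul1mx.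
  by case: (HObf (Omb, i)) => _ ->; rewrite eqxx.
have hT : forall i j, U *m ket i j = T j *m (U *m ket i Omt).
  move=> i j; rewrite /T -!mulmxA (mulmxA (adjmx U)) HUu1 mul1mx.
  by case: (HOtf (Omt, j)) => _ ->; rewrite eqxx.
pose C i j a b := ip (ket a b) (U *m ket i j).
pose be i a a' := ip (ket a Omt) (B i *m ket a' Omt).
pose ta j b b' := ip (ket Omb b) (T j *m ket Omb b').
have step1 : forall i j a b, et j <= delta ->
    C i j a b = \sum_a' C Omb j a' b * be i a a'.
  move=> i j a b hj.
  rewrite /C hB {1}(inV_expand Horth (HV _ _ Ib0 hj)) mulmx_sumr ip_sumr.
  apply: eq_bigr => a' _.
  rewrite mulmx_sumr ip_sumr (sum_only (i:=b)) => [|b' nb]; last first.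
    by rewrite -scalemxAr ipZr (Gb Omt Horth HAb HAt Hcomm HA1b HA1t HA2 _ _ _ _ (HB i)) eq_sym (negbTE nb) mul0r mulr0.
  by rewrite -scalemxAr ipZr (Gb Omt Horth HAb HAt Hcomm HA1b HA1t HA2 _ _ _ _ (HB i)) eqxx mul1r.
have step2 : forall j a b, C Omb j a b = \sum_b' C Omb Omt a b' * ta j b b'.
  move=> j a b.
  rewrite /C hT {1}(inV_expand Horth (HV _ _ Ib0 It0)) mulmx_sumr ip_sumr.
  rewrite (sum_only (i:=a)) => [|a' na]; last first.
    rewrite mulmx_sumr ip_sumr big1 // => b' _.
    by rewrite -scalemxAr ipZr (Gt Omb Horth HAb HAt Hcomm HA1b HA1t HA2 _ _ _ _ (HT j)) eq_sym (negbTE na) mul0r mulr0.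
  rewrite mulmx_sumr ip_sumr; apply: eq_bigr => b' _.
  by rewrite -scalemxAr ipZr (Gt Omb Horth HAb HAt Hcomm HA1b HA1t HA2 _ _ _ _ (HT j)) eqxx mul1r.
have [al [ga Hag]] : exists (al : 'I_m -> algC) (ga : 'I_k -> algC),
    forall a b, C Omb Omt a b = al a * ga b.
  apply: (prod_state Horth HA1b HA1t (HV _ _ Ib0 It0)).
    by rewrite ipU (ortho_ip Horth) !eqxx.
  move=> X Y hX hY.
  have := HA2 Omb Omt _ _ (HUb1 _ hX) (HUt1 _ hY).
  have e : adjmx U *m X *m U *m (adjmx U *m Y *m U) = adjmx U *m (X *m Y) *m U.
    by rewrite !mulmxA -(mulmxA _ U (adjmx U)) HUu2 mulmx1.
  rewrite e !braketE !ip_adjl !mulmxA => ->.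
    by [].
pose u i a := \sum_a' be i a a' * al a'.
pose v j b := \sum_b' ta j b b' * ga b'.
have step4 : forall i j a b, et j <= delta -> C i j a b = u i a * v j b.
  move=> i j a b hj; rewrite step1 // /u mulr_suml; apply: eq_bigr => a' _.
  rewrite step2 /v mulr_suml mulr_sumr; apply: eq_bigr => b' _.
  rewrite Hag; ring.
have step5 : forall i j, eb i <= delta -> et j <= delta ->
    U *m ket i j = \sum_a \sum_b (u i a * v j b) *: ket a b.
  move=> i j hi hj; rewrite {1}(inV_expand Horth (HV _ _ hi hj)).
  by apply: eq_bigr => a _; apply: eq_bigr => b _; rewrite -step4.
have step6 : forall i i' j j', eb i <= delta -> eb i' <= delta -> et j <= delta -> et j' <= delta ->
    ((i == i') && (j == j'))%:R =
    (\sum_a (u i a)^* * u i' a) * (\sum_b (v j b)^* * v j' b).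
  move=> i i' j j' hi hi' hj hj'.
  rewrite -(ortho_ip Horth) -ipU (step5 i j) // (step5 i' j') // ip_suml mulr_suml.
  apply: eq_bigr => a _; rewrite ip_suml mulr_sumr; apply: eq_bigr => b _.
  rewrite ipZl (ip_expand Horth) rmorphM /=; ring.
pose sb0 := \sum_i pb i *: outer (u i).
pose st0 := \sum_j pt j *: outer (v j).
pose s := \sum_b (v Omt b)^* * v Omt b.
pose r := \sum_a (u Omb a)^* * u Omb a.
have rs1 : r * s = 1.
  by have := step6 Omb Omb Omt Omt Ib0 Ib0 It0 It0; rewrite !eqxx => <-.
have Hmain : U *m rho0 *m adjmx U = prod_op ket sb0 st0.
  rewrite /rho0 rho0E /sb0 /st0 prod_op_suml mulmx_sumr mulmx_suml.
  apply: eq_bigr => i _.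
  rewrite prod_op_sumr mulmx_sumr mulmx_suml; apply: eq_bigr => j _.
  rewrite (prod_op_scale ket (c := pb i * pt j) (A' := outer (u i)) (B' := outer (v j))); last first.
    by move=> a a' b b'; rewrite !mxE; ring.
  rewrite -scalemxAr -scalemxAl /ketbra (mulmxA U) -(mulmxA (U *m ket i j)) -adjmxM.
  case: (boolP (eb i <= delta)) => hi; last by rewrite Hpbd // mul0r !scale0r.
  case: (boolP (et j <= delta)) => hj; last by rewrite Hptd // mulr0 !scale0r.
  by rewrite step5 //; have := phi_outer ket (u i) (v j); rewrite /= => ->.
have sreal : s^* = s.
  by rewrite /s rmorph_sum; apply: eq_bigr => b _; rewrite rmorphM /= conjCK mulrC.
have rreal : r^* = r.
  by rewrite /r rmorph_sum; apply: eq_bigr => b _; rewrite rmorphM /= conjCK mulrC.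
have herm_outer : forall p (x : 'I_p -> algC), adjmx (outer x) = outer x.
  by move=> p x; apply/matrixP => a a'; rewrite adjmxE !mxE rmorphM /= conjCK mulrC.
split.
  by move=> w; rewrite Hmain; exact: prod_op_inV.
exists (s *: sb0), (r *: st0); split.
- rewrite adjmxZ sreal /sb0 adjmx_sum; congr (_ *: _); apply: eq_bigr => i _.
  by rewrite adjmxZ herm_outer geC0_conj.
- rewrite adjmxZ rreal /st0 adjmx_sum; congr (_ *: _); apply: eq_bigr => j _.
  by rewrite adjmxZ herm_outer geC0_conj.
- rewrite Hmain (prod_op_scale ket (c := 1) (A' := s *: sb0) (B' := r *: st0)) ?scale1r //.
  move=> a a' b b'; rewrite !mxE.
  have -> : s * sb0 a a' * (r * st0 b b') = (r * s) * (sb0 a a' * st0 b b') by ring.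
  by rewrite rs1 !mul1r.
- apply: (spec_lemma (P := fun i => eb i <= delta)) => [i|i i' hi hi']; first exact: Hpbd.
  by have := step6 i i' Omt Omt hi hi' It0 It0; rewrite eqxx andbT mulrC => ->.
- apply: (spec_lemma (P := fun j => et j <= delta)) => [j|j j' hj hj']; first exact: Hptd.
  by have := step6 Omb Omb j j' Ib0 Ib0 hj hj'; rewrite eqxx => ->.
Qed.
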